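(* Let $\mathcal{H}$ be a nonzero Hilbert space, $n\ge 2$, and $i,j,k\in\{1,\dots,n\}$ with $j\neq i$ and $j\neq k$. Then in $\mathcal{C}(\mathcal{H}^{\otimes n})$, $$D_{i,k}=\exists_{\mathcal{H}_j}(D_{i,j}\cap D_{j,k}).$$
   Context: $\mathcal{H}^{\otimes n}=\mathcal{H}_1\otimes\cdots\otimes\mathcal{H}_n$ with each $\mathcal{H}_m=\mathcal{H}$; $\mathcal{C}(\cdot)$ is the lattice of closed subspaces. Fix an orthonormal basis $(a_i)_{i\in I}$ of $\mathcal{H}$; every $v\in\mathcal{H}^{\otimes n}$ is uniquely $\sum_{\alpha\in I^n}\lambda_\alpha\,a_{\alpha(1)}\otimes\cdots\otimes a_{\alpha(n)}$. For $F\subseteq\{1,\dots,n\}$ let $\mathrm{Perm}_n(F)$ be the permutations of $\{1,\dots,n\}$ fixing every element outside $F$, and $D_F$ the closed subspace of all such $v$ with $\lambda_\alpha=\lambda_{\alpha\sigma}$ for all $\sigma\in\mathrm{Perm}_n(F)$ and all $\alpha$, where $\alpha\sigma=(\alpha(\sigma(1)),\dots,\alpha(\sigma(n)))$ (this is independent of the basis). $D_{i,j}=D_{\{i,j\}}$; so $D_{i,i}=\mathcal{H}^{\otimes n}$. $\exists_{\mathcal{H}_j}S$ is the smallest closed subspace containing $S$ of the form ''$\mathcal{H}$ in the $j$-th factor tensored with a closed subspace $T$ of the tensor product of the remaining $n-1$ factors'' (via the canonical reordering isomorphism). *)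

(* Defs.v *)
From HB Require Import structures.
From mathcomp Require Import all_boot all_order all_algebra all_fingroup.
From mathcomp Require Import all_classical all_reals all_analysis.
From mathcomp Require Import complex.
Set Implicit Arguments. Unset Strict Implicit. Unset Printing Implicit Defensive.
Import Order.TTheory GRing.Theory Num.Theory.
Local Open Scope classical_set_scope.
Local Open Scope ring_scope.

(* Model: H = l^2(I) over C = R[i], with orthonormal basis (a_i)_{i in I};
   H^{(x) n} = l^2(I^n), positions 1..n are 'I_n (0..n-1).
   A vector of H^{(x) n} is its coefficient family alpha |-> lambda_alpha. *)

Section Tensor.
Variables (R : realType) (I : choiceType).

Definition sqmod (z : R[i]) : R := let: Complex a b := z in a ^+ 2 + b ^+ 2.

Definition norm2 (J : choiceType) (v : J -> R[i]) : \bar R :=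
  \esum_(a in [set: J]) (sqmod (v a))%:E.

Definition ell2 (J : choiceType) : set (J -> R[i]) :=
  [set v | (norm2 v < +oo)%E].

Definition closed_subspace (J : choiceType) (S : set (J -> R[i])) : Prop :=
  [/\ S `<=` @ell2 J,
      S (fun _ => 0),
      (forall u v, S u -> S v -> S (fun a => u a + v a)),
      (forall (c : R[i]) v, S v -> S (fun a => c * v a)) &
      (forall (u : nat -> J -> R[i]) v, (forall k, S (u k)) -> @ell2 J v ->
         (forall e : R, 0 < e -> exists N, forall k, (N <= k)%N ->
             (norm2 (fun a => (u k a - v a)%R) <= e%:E)%E) ->
         S v)].

Variable n : nat.

Definition tindex := 'I_n -> I.

Definition Perm_on (F : {set 'I_n}) (s : 'S_n) : Prop :=
  forall m, m \notin F -> s m = m.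

Definition D (F : {set 'I_n}) : set (tindex -> R[i]) :=
  [set v | @ell2 tindex v /\
     forall (s : 'S_n) (alpha : tindex), Perm_on F s ->
       v alpha = v (fun m => alpha (s m))].

Definition D2 (i j : 'I_n) := D [set i; j].

Definition rest (j : 'I_n) := {m : 'I_n | m != j}.
Definition rindex (j : 'I_n) := rest j -> I.

Definition glue (j : 'I_n) (a : I) (beta : rindex j) : tindex :=
  fun m => if @insub _ (fun m => m != j) (rest j) m is Some m' then beta m'
           else a.

(* H_j (x) T, for T a subspace of the tensor product of the other factors:
   v = sum_a a_a (x) t_a with t_a in T *)
Definition cyl (j : 'I_n) (T : set (rindex j -> R[i])) : set (tindex -> R[i]) :=
  [set v | @ell2 tindex v /\ forall a : I, T (fun beta => v (glue a beta))].

Definition is_cyl (j : 'I_n) (W : set (tindex -> R[i])) : Prop :=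
  exists T : set (rindex j -> R[i]), closed_subspace T /\ W = cyl (j:=j) T.

(* exists_{H_j} S : the smallest closed subspace of the form H_j (x) T
   containing S (the intersection of all of them) *)
Definition ex_j (j : 'I_n) (S : set (tindex -> R[i])) : set (tindex -> R[i]) :=
  \bigcap_(W in [set W | closed_subspace W /\ is_cyl j W /\ S `<=` W]) W.

End Tensor.

(* Main.v *)
Require Import Defs.
From HB Require Import structures.
From mathcomp Require Import all_boot all_order all_algebra all_fingroup.
From mathcomp Require Import all_classical all_reals all_analysis.
From mathcomp Require Import complex.
From mathcomp Require Import ring lra.
Import Order.TTheory GRing.Theory Num.Theory.
Local Open Scope classical_set_scope.
Local Open Scope ring_scope.
Set Implicit Arguments. Unset Strict Implicit. Unset Printing Implicit Defensive.
Section Ana.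
Variable R : realType.
Lemma sqmodD (x y : R[i]) : sqmod (x + y) <= 2 * sqmod x + 2 * sqmod y.
Proof. case: x => a b; case: y => c d /=. have := sqr_ge0 (a - c); have := sqr_ge0 (b - d). nra. Qed.
Lemma sqmodM (x y : R[i]) : sqmod (x * y) = sqmod x * sqmod y.
Proof. case: x => a b; case: y => c d /=. ring. Qed.
Lemma sqmod_ge0 (x : R[i]) : 0 <= sqmod x.
Proof. case: x => a b /=. nra. Qed.
Lemma sqmod0 (x : R[i]) : sqmod x = 0 -> x = 0.
Proof. case: x => a b /= h. have ha : a = 0 by nra. have hb : b = 0 by nra. by rewrite ha hb. Qed.
Lemma sqmodB (x y : R[i]) : sqmod (x - y) = sqmod (y - x).
Proof. case: x => a b; case: y => c d /=. ring. Qed.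
Lemma sqmod00 : sqmod (0 : R[i]) = 0.
Proof. rewrite /=. ring. Qed.

Variable J : choiceType.

Lemma norm2_ge0 (v : J -> R[i]) : (0 <= norm2 v)%E.
Proof. apply: esum_ge0 => x _; rewrite lee_fin; exact: sqmod_ge0. Qed.

Lemma esum_lt_fin (h : J -> R) : (forall a, 0 <= h a) ->
  (\esum_(a in [set: J]) (h a)%:E < +oo)%E ->
  forall N : nat, (\esum_(a in [set: J]) (N%:R * h a)%:E < +oo)%E.
Proof.
move=> h0 hf; elim=> [|N IH].
  rewrite esum1 // => a _; by rewrite mul0r.
rewrite (eq_esum (b := fun a => ((h a)%:E + (N%:R * h a)%:E)%E)); last first.
  by move=> a _; rewrite -EFinD mulrS mulrDl mul1r.
rewrite esumD; last 2 first.
- by move=> a _; rewrite lee_fin.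
- by move=> a _; rewrite lee_fin mulr_ge0.
exact: lte_add_pinfty.
Qed.

Lemma ell2_le (f g : J -> R[i]) : ell2 g -> (forall a, sqmod (f a) <= sqmod (g a)) -> ell2 f.
Proof.
rewrite /ell2 /norm2 /= => hg hfg; apply: le_lt_trans hg.
by apply: le_esum => a _; rewrite lee_fin.
Qed.

Lemma ell2_0 : ell2 (fun _ : J => 0 : R[i]).
Proof. rewrite /ell2 /norm2 /= esum1 // => a _; by rewrite /sqmod /= expr0n /= addr0. Qed.

Lemma ell2D (u v : J -> R[i]) : ell2 u -> ell2 v -> ell2 (fun a => u a + v a).
Proof.
rewrite /ell2 /norm2 /= => hu hv.
apply: (@le_lt_trans _ _ (\esum_(a in [set: J]) (2%:R * sqmod (u a))%:E +
    \esum_(a in [set: J]) (2%:R * sqmod (v a))%:E)%E); last first.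
  apply: lte_add_pinfty; apply: esum_lt_fin => // a; exact: sqmod_ge0.
rewrite -esumD; last 2 first.
- by move=> a _; rewrite lee_fin mulr_ge0 ?sqmod_ge0.
- by move=> a _; rewrite lee_fin mulr_ge0 ?sqmod_ge0.
by apply: le_esum => a _; rewrite -EFinD lee_fin sqmodD.
Qed.

Lemma ell2Z (c : R[i]) (v : J -> R[i]) : ell2 v -> ell2 (fun a => c * v a).
Proof.
rewrite /ell2 /norm2 /= => hv.
apply: (@le_lt_trans _ _ (\esum_(a in [set: J]) (((Num.truncn (sqmod c)).+1)%:R * sqmod (v a))%:E)%E); last first.
  exact: (@esum_lt_fin (fun a => sqmod (v a)) (fun a => sqmod_ge0 (v a)) hv _).
apply: le_esum => a _; rewrite lee_fin sqmodM.
apply: ler_wpM2r; first exact: sqmod_ge0.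
exact/ltW/truncnS_gt.
Qed.

Lemma sqmod_le_norm2 (v : J -> R[i]) a : ((sqmod (v a))%:E <= norm2 v)%E.
Proof.
apply: esum_ge; exists [set a]; first by split; [exact: finite_set1|].
by rewrite fsbig_set1.
Qed.

Lemma closed_gen (rel : J -> J -> Prop) :
  closed_subspace [set v : J -> R[i] | ell2 v /\ forall a b, rel a b -> v a = v b].
Proof.
split.
- by move=> v [].
- by split; [exact: ell2_0|].
- move=> u v [hu su] [hv sv]; split; first exact: ell2D.
  by move=> a b hab; rewrite (su _ _ hab) (sv _ _ hab).
- move=> c v [hv sv]; split; first exact: ell2Z.
  by move=> a b hab; rewrite (sv _ _ hab).
move=> u v hu hv hlim; split => // a b hab.
apply/eqP; rewrite -subr_eq0; apply/eqP/sqmod0.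
set d := v a - v b.
have hd0 := sqmod_ge0 d.
case: (ltrP 0 (sqmod d)) => hd; last by apply/le_anti/andP.
have he : 0 < sqmod d / 8 by rewrite divr_gt0.
have [N HN] := hlim _ he.
have := HN N (leqnn N).
move: (hu N) => [_ suN].
have h1 := le_trans (sqmod_le_norm2 (fun x => u N x - v x) a) (HN N (leqnn N)).
have h2 := le_trans (sqmod_le_norm2 (fun x => u N x - v x) b) (HN N (leqnn N)).
rewrite lee_fin /= in h1; rewrite lee_fin /= in h2.
have hdd : d = (v a - u N a) + (u N b - v b).
  by rewrite /d (suN _ _ hab); ring.
have := sqmodD (v a - u N a) (u N b - v b).
rewrite -hdd sqmodB => h3 _.
lra.
Qed.
End Ana.
Ltac neqs := repeat match goal with H : is_true (?x != ?y) |- _ =>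
  have := negbTE H; rewrite eq_sym in H; have := negbTE H; clear H; move=> ? ? end.
Ltac rwF := repeat match goal with H : (_ == _) = false |- _ => progress rewrite H end.
Ltac simp := repeat progress (rewrite ?eqxx /=; rwF).
Ltac mcase m i := case: (eqVneq m i) => [?|?]; [subst m|].
Section Comb.
Variables (n : nat).
Lemma tpE (x y z : 'I_n) : tperm x y z = if z == x then y else if z == y then x else z.
Proof. by case: tpermP => [->|->|/eqP/negbTE -> /eqP/negbTE ->]; rewrite ?eqxx //; case: eqP. Qed.


Lemma tpc1 (i j k m : 'I_n) : j != i -> j != k -> i != k ->
  tperm i j (tperm k j m) = tperm k j (tperm i k m).
Proof.
move=> hji hjk hik; rewrite !tpE.
by mcase m i; [|mcase m j; [|mcase m k]]; neqs; simp.
Qed.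
End Comb.
Section Main.
Variables (R : realType) (I : choiceType) (n : nat).
Local Notation tix := (tindex I n).
Local Notation vec := (tix -> R[i]).

Definition tw (α : tix) (s : {perm 'I_n}) : tix := fun m => α (s m).
Definition symm (i k : 'I_n) (v : vec) := forall α, v α = v (tw α (tperm i k)).

Lemma perm2 (i k : 'I_n) (s : {perm 'I_n}) : Perm_on [set i; k] s ->
  (forall m, s m = m) \/ (forall m, s m = tperm i k m).
Proof.
move=> hs.
have hs' : forall m, m != i -> m != k -> s m = m.
  by move=> m a b; apply: hs; rewrite in_set2 negb_or a b.
have gen : forall x, x \in [set i; k]%SET -> s x \in [set i; k]%SET.
  move=> x hx; apply/negPn/negP => hsx.
  have /perm_inj ex := hs _ hsx.
  by move: hsx; rewrite ex hx.
have si := gen i (set21 i k); have sk := gen k (set22 i k).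
rewrite !in_set2 in si sk.
case: (eqVneq i k) => [eik|nik].
  subst k; left => m; case: (eqVneq m i) => [->|hm]; last exact: hs'.
  by move: si; rewrite orbb => /eqP.
case/orP: si => /eqP si.
  left => m; case: (eqVneq m i) => [->//|hmi]; case: (eqVneq m k) => [->|hmk]; last exact: hs'.
  case/orP: sk => /eqP sk //; exfalso; move/eqP: nik; apply; apply: (@perm_inj _ s); by rewrite si sk.
right => m; rewrite tpE.
case: (eqVneq m i) => [->//|hmi]; case: (eqVneq m k) => [->|hmk]; last exact: hs'.
case/orP: sk => /eqP sk //; exfalso; move/eqP: nik; apply; apply: (@perm_inj _ s); by rewrite si sk.
Qed.

Lemma D2P (i k : 'I_n) (v : vec) : D2 i k v <-> ell2 v /\ symm i k v.
Proof.
rewrite /D2 /D /=; split => -[h1 h2]; split => //.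
  move=> α; apply: h2 => m; rewrite in_set2 negb_or => /andP[a b].
  by rewrite tpermD // eq_sym.
move=> s α hs; case: (perm2 hs) => E.
  by congr v; apply: funext => m; rewrite E.
by rewrite h2; congr v; apply: funext => m; rewrite /tw E.
Qed.
End Main.
Section U.
Variables (R : realType) (I : choiceType) (n : nat).
Local Notation tix := (tindex I n).
Local Notation vec := (tix -> R[i]).

Definition U (i j k : 'I_n) (c : I) (v : vec) (α : tix) : R[i] :=
  if α j == c then v α else if α i == c then v (tw α (tperm i j))
  else if α k == c then v (tw α (tperm k j)) else 0.

Lemma twK (α : tix) (x y : 'I_n) : tw (tw α (tperm x y)) (tperm x y) = α.
Proof. by apply: funext => m; rewrite /tw tpermK. Qed.

Lemma twid (α : tix) (x y : 'I_n) : α x = α y -> tw α (tperm x y) = α.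
Proof. move=> h; apply: funext => m; rewrite /tw; by case: tpermP => // ->. Qed.

Lemma U_symij (i j k : 'I_n) c (v : vec) : j != i -> j != k -> symm i k v ->
  forall α, U i j k c v (tw α (tperm i j)) = U i j k c v α.
Proof.
move=> hji hjk hs α.
have Ej : tw α (tperm i j) j = α i by rewrite /tw tpermR.
have Ei : tw α (tperm i j) i = α j by rewrite /tw tpermL.
rewrite /U Ej Ei twK.
case: (eqVneq (α j) c) => hj; case: (eqVneq (α i) c) => hi //=.
- by rewrite twid // hi hj.
case: (eqVneq k i) => [ek|nki].
  by subst k; rewrite Ei (negbTE hj) (negbTE hi).
have Ek : tw α (tperm i j) k = α k by rewrite /tw tpermD // eq_sym.
rewrite Ek; case: (α k == c) => //.
rewrite [in RHS]hs; congr v; apply: funext => m; rewrite /tw.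
by rewrite tpc1 // eq_sym.
Qed.
End U.
Section U2.
Variables (R : realType) (I : choiceType) (n : nat).
Local Notation tix := (tindex I n).
Local Notation vec := (tix -> R[i]).

Lemma symmC (i k : 'I_n) (v : vec) : symm i k v -> symm k i v.
Proof. by rewrite /symm tpermC. Qed.

Lemma U_comm (i j k : 'I_n) c (v : vec) : j != i -> j != k -> symm i k v ->
  forall α, U i j k c v α = U k j i c v α.
Proof.
move=> hji hjk hs α; rewrite /U.
case: (α j == c) => //.
case: (eqVneq (α i) c) => hi; case: (eqVneq (α k) c) => hk //=.
case: (eqVneq k i) => [ek|nki]; first by subst k.
rewrite [in RHS]hs; congr v; apply: funext => m; rewrite /tw !tpE.
by mcase m i; [|mcase m j; [|mcase m k]]; neqs; simp; rewrite ?hi ?hk.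
Qed.

Lemma sqmod_if (b : bool) (x : R[i]) : sqmod (if b then x else 0) <= sqmod x.
Proof. case: b => //; rewrite /sqmod /= expr0n /= addr0; exact: sqmod_ge0. Qed.

Lemma ell2_if (J : choiceType) (P : J -> bool) (g : J -> R[i]) : ell2 g -> ell2 (fun a => if P a then g a else 0).
Proof.
rewrite /ell2 /norm2 /= => hg; apply: le_lt_trans hg.
by apply: le_esum => a _; rewrite lee_fin sqmod_if.
Qed.

Lemma ell2_tw (s : {perm 'I_n}) (v : vec) : ell2 v -> ell2 (fun α => v (tw α s)).
Proof.
rewrite /ell2 /norm2 /=.
rewrite (reindex_esum [set: tix] [set: tix] (fun α => tw α s) (fun α => (sqmod (v α))%:E)) //.
split.
- by [].
- move=> a b _ _ h; apply: funext => m.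
  have := congr1 (fun f => f (s^-1 m)%g) h; by rewrite /tw permKV.
- move=> b _; exists (tw b (s^-1)%g) => //; apply: funext => m; by rewrite /tw permK.
Qed.

Lemma U_ell2 (i j k : 'I_n) c (v : vec) : ell2 v -> ell2 (U i j k c v).
Proof.
move=> hv.
have -> : U i j k c v = (fun α => (if α j == c then v α else 0) +
   ((if (α j != c) && (α i == c) then v (tw α (tperm i j)) else 0) +
    (if [&& α j != c, α i != c & α k == c] then v (tw α (tperm k j)) else 0))).
  apply: funext => α; rewrite /U.
  case: (α j == c) => /=; first by rewrite !addr0.
  by case: (α i == c) => /=; case: (α k == c) => /=; rewrite ?addr0 ?add0r.
apply: ell2D; [|apply: ell2D].
- exact: (@ell2_if _ (fun a => a j == c) v hv).
- exact: (@ell2_if _ (fun a => (a j != c) && (a i == c)) _ (ell2_tw (tperm i j) hv)).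
- exact: (@ell2_if _ (fun a => [&& a j != c, a i != c & a k == c]) _ (ell2_tw (tperm k j) hv)).
Qed.

Lemma U_sym3 (i j k : 'I_n) c (v : vec) : j != i -> j != k -> ell2 v -> symm i k v ->
  D2 i j (U i j k c v) /\ D2 j k (U i j k c v).
Proof.
move=> hji hjk hv hs; have he := U_ell2 i j k c hv.
split; apply/D2P; split => //.
  by move=> α; rewrite U_symij.
move=> α; rewrite (U_comm c hji hjk hs α) (U_comm c hji hjk hs (tw α _)) tpermC.
by rewrite U_symij //; exact: symmC.
Qed.
End U2.
Section G.
Variables (R : realType) (I : choiceType) (n : nat).
Local Notation tix := (tindex I n).
Local Notation vec := (tix -> R[i]).

Definition rstr (j : 'I_n) (α : tix) : rindex I j := fun m' => α (val m').
Arguments rstr : clear implicits.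

Lemma glue_rstrE (j : 'I_n) (a : I) (β : tix) m :
  Defs.glue a (rstr j β) m = if m == j then a else β m.
Proof.
rewrite /Defs.glue; case: insubP => [m' /= hm' e|hm].
  by rewrite /rstr /= e (negbTE hm').
by move/negPn: hm => ->.
Qed.

Lemma rstr_glue (j : 'I_n) (a : I) (β : rindex I j) : rstr j (Defs.glue a β) = β.
Proof. by apply: funext => m'; rewrite /rstr /Defs.glue valK. Qed.

Lemma glue_rstr (j : 'I_n) (β : tix) : Defs.glue (β j) (rstr j β) = β.
Proof. by apply: funext => m; rewrite glue_rstrE; case: eqP => // ->. Qed.

Lemma glue_j (j : 'I_n) (a : I) (β : rindex I j) : Defs.glue a β j = a.
Proof. by rewrite /Defs.glue insubF // eqxx. Qed.

Lemma ell2_slice (j : 'I_n) (a : I) (v : vec) : ell2 v ->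
  ell2 (fun β : rindex I j => v (Defs.glue a β)).
Proof.
rewrite /ell2 /norm2 /= => hv; apply: le_lt_trans hv.
rewrite -(esum_image [set: rindex I j] (Defs.glue a) (fun x => (sqmod (v x))%:E)); last first.
  move=> x y _ _ h; by rewrite -(rstr_glue a x) h rstr_glue.
rewrite (esum_mkcond (Defs.glue a @` [set: rindex I j])).
apply: le_esum => x _; case: ifP => // _; rewrite lee_fin; exact: sqmod_ge0.
Qed.
End G.
Arguments rstr {I n} j α _.
Section Fin.
Variables (R : realType) (I : choiceType) (n : nat).
Local Notation tix := (tindex I n).
Local Notation vec := (tix -> R[i]).

Definition Tset (i j k : 'I_n) : set (rindex I j -> R[i]) :=
  [set w | ell2 w /\ forall α : tix, w (rstr j α) = w (rstr j (tw α (tperm i k)))].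
Arguments Tset : clear implicits.

Lemma T_closed (i j k : 'I_n) : closed_subspace (Tset i j k).
Proof.
have -> : Tset i j k = [set w | ell2 w /\ forall a b,
    (exists α : tix, a = rstr j α /\ b = rstr j (tw α (tperm i k))) -> w a = w b].
  apply/seteqP; split => w [h1 h2]; split => //.
    by move=> a b [α [-> ->]]; exact: h2.
  by move=> α; apply: h2; exists α.
exact: closed_gen.
Qed.

Lemma D2_closed (i k : 'I_n) : closed_subspace (@D2 R I n i k).
Proof.
have -> : @D2 R I n i k = [set w | ell2 w /\ forall a b,
    b = tw a (tperm i k) -> w a = w b].
  apply/seteqP; split => w.
    by move/D2P => [h1 h2]; split => // a b ->; exact: h2.
  by move=> [h1 h2]; apply/D2P; split => // α; exact: h2.
exact: closed_gen.
Qed.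

Lemma D2_cyl (i j k : 'I_n) : j != i -> j != k -> @D2 R I n i k = cyl (Tset i j k).
Proof.
move=> hji hjk.
have tj : tperm i k j = j by rewrite tpermD // eq_sym.
apply/seteqP; split => v.
  move/D2P => [hv hs]; split => // a; split; first exact: ell2_slice.
  move=> α; rewrite [LHS]hs; congr v; apply: funext => m; rewrite /tw !glue_rstrE.
  by rewrite -{1}tj (inj_eq perm_inj).
move=> [hv hsl]; apply/D2P; split => // α.
have e : tw α (tperm i k) j = α j by rewrite /tw tj.
have := (hsl (α j)).2 α.
by rewrite glue_rstr -e glue_rstr.
Qed.

Lemma sub3 (i j k : 'I_n) : j != i -> j != k ->
  (@D2 R I n i j `&` @D2 R I n j k) `<=` @D2 R I n i k.
Proof.
move=> hji hjk v [/D2P [hv h1] /D2P [_ h2]]; apply/D2P; split => // α.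
case: (eqVneq i k) => [eik|nik].
  by subst k; rewrite tperm1; congr v; apply: funext => m; rewrite /tw perm1.
rewrite h1 h2 h1; congr v; apply: funext => m; rewrite /tw !tpE.
by mcase m i; [|mcase m j; [|mcase m k]]; neqs; simp.
Qed.
End Fin.
Section Fin2.
Variables (R : realType) (I : choiceType) (n : nat).
Lemma main_sec (i j k : 'I_n) : j != i -> j != k ->
  @D2 R I n i k = @ex_j R I n j (@D2 R I n i j `&` @D2 R I n j k).
Proof.
move=> hji hjk.
apply/seteqP; split => v.
  move=> hv W [cW [[T' [cT' EW]] sub]].
  rewrite EW; move/D2P: (hv) => [hv2 hs].
  split => // a.
  have [h1 h2] := U_sym3 a hji hjk hv2 hs.
  have hc : W (U i j k a v) by apply: sub; split.
  rewrite EW in hc; have := hc.2 a.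
  have -> : (fun β : rindex I j => U i j k a v (Defs.glue a β)) = (fun β => v (Defs.glue a β)).
    by apply: funext => β; rewrite /U glue_j eqxx.
  by [].
move=> hex; apply: hex; split; first exact: D2_closed.
split; last exact: sub3.
exists (@Tset R I n i j k); split; [exact: T_closed | exact: D2_cyl].
Qed.
End Fin2.

Theorem mainTheorem14 (R : realType) (I : choiceType) (I_nonempty : inhabited I)
    (n : nat) (hn : (2 <= n)%N) (i j k : 'I_n) (hji : j != i) (hjk : j != k) :
  @D2 R I n i k = @ex_j R I n j (@D2 R I n i j `&` @D2 R I n j k).
Proof. exact: main_sec. Qed.
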